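(* Let $g$ be self-neglecting and let $f\in\Gamma_\alpha(g)$. (i) If $g$ is ultimately decreasing and $\alpha<0$, then $f$ is tail equivalent (i.e. $f(t)/\tilde f(t)\to1$ as $t\to\infty$) to a function $\tilde f$ that is ultimately decreasing. (ii) If $g$ is ultimately increasing and $\alpha>0$, then $f$ is tail equivalent to a function that is ultimately increasing.
   Context: For $\alpha\in\mathbb{R}$ and a positive measurable function $g$, an ultimately positive measurable function $f:\mathbb{R}\to\mathbb{R}$ belongs to $\Gamma_\alpha(g)$ if $\lim_{t\to\infty} f(t+xg(t))/f(t)=e^{\alpha x}$ for all $x\in\mathbb{R}$. A measurable $g:\mathbb{R}\to(0,\infty)$ is self-neglecting if $g(t)/t\to0$ and $g(t+xg(t))/g(t)\to1$ locally uniformly in $x\in\mathbb{R}$ as $t\to\infty$. *)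

(* Defs.v *)
From HB Require Import structures.
From mathcomp Require Import all_boot all_order all_algebra.
From mathcomp Require Import all_classical all_reals all_analysis.
Set Implicit Arguments. Unset Strict Implicit. Unset Printing Implicit Defensive.
Import Order.TTheory GRing.Theory Num.Theory.
Import numFieldNormedType.Exports.
Local Open Scope classical_set_scope.
Local Open Scope ring_scope.

Definition ultimately {R : realType} (P : R -> Prop) : Prop :=
  exists M : R, forall t, M < t -> P t.

Definition ult_nonincreasing {R : realType} (h : R -> R) : Prop :=
  exists M : R, forall s t, M < s -> s <= t -> h t <= h s.

Definition ult_nondecreasing {R : realType} (h : R -> R) : Prop :=
  exists M : R, forall s t, M < s -> s <= t -> h s <= h t.

Definition self_neglecting {R : realType} (g : R -> R) : Prop :=
  measurable_fun [set: R] g /\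
  (forall t, 0 < g t) /\
  ((fun t => g t / t) @ +oo --> (0 : R)) /\
  (forall a b : R, forall eps : R, 0 < eps ->
     ultimately (fun t => forall x, a <= x <= b ->
        `| g (t + x * g t) / g t - 1 | < eps)).

Definition Gamma {R : realType} (alpha : R) (g : R -> R) (f : R -> R) : Prop :=
  measurable_fun [set: R] f /\
  ultimately (fun t => 0 < f t) /\
  (forall x : R, (fun t => f (t + x * g t) / f t) @ +oo --> expR (alpha * x)).

Definition tail_equiv {R : realType} (f h : R -> R) : Prop :=
  (fun t => f t / h t) @ +oo --> (1 : R).

(* Main.v *)
Require Import Defs.
From HB Require Import structures.
From mathcomp Require Import all_boot all_order all_algebra.
From mathcomp Require Import all_classical all_reals all_analysis.
From mathcomp Require Import measurable_realfun ring lra.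
Import Order.TTheory GRing.Theory Num.Theory.
Import numFieldNormedType.Exports.
Local Open Scope classical_set_scope.
Local Open Scope ring_scope.
Lemma aff_meas (R : realType) (b c : R) : measurable_fun [set: R] (fun y : R => b + c * y).
Proof.
apply: continuous_measurable_fun.
move=> y; apply: continuousD; first exact: cvg_cst.
apply: continuousM; first exact: cvg_cst.
exact: cvg_id.
Qed.

Section Aff.
Variable R : realType.
Variables (b c : R).
Local Notation lam := (@lebesgue_measure R).
Let phi := (fun y : R => b + c * y).
Local Open Scope ereal_scope.
Definition affm (A : set (measurableTypeR R)) : \bar R := `|c|%:E * lam (phi @^-1` A).

Let mphi (B : set (measurableTypeR R)) : measurable B -> measurable (phi @^-1` B : set (measurableTypeR R)).
Proof. by move=> mB; rewrite -[X in measurable X]setTI; exact: aff_meas. Qed.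

Lemma affm0 : affm set0 = 0.
Proof. by rewrite /affm preimage_set0 measure0 mule0. Qed.

Let affm_ge0 B : 0 <= affm B.
Proof.
by rewrite /affm mule_ge0.
Qed.
Let affm_sigma_additive : semi_sigma_additive affm.
Proof.
move=> F mF tF mUF; rewrite [X in X @ \oo --> _](_ : _ =
    (fun n => `|c|%:E * \sum_(0 <= i < n) lam (phi @^-1` F i))); last first.
  by apply/funext => k; rewrite ge0_sume_distrr.
rewrite /affm preimage_bigcup.
apply: cvgeZl => //.
apply: measure_semi_sigma_additive.
- by move=> n; exact: mphi.
- apply/trivIsetP => /= i j _ _ ij; rewrite -preimage_setI.
  by move/trivIsetP : tF => /(_ _ _ _ _ ij) ->//; rewrite preimage_set0.
- by rewrite -preimage_bigcup; exact: mphi.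
Qed.
HB.instance Definition _ := isMeasure.Build _ _ _ affm affm0 affm_ge0 affm_sigma_additive.
Local Close Scope ereal_scope.
Lemma affm_itv (c0 : 0 < c) (x z : R) : affm `]x, z] = lam `]x, z].
Proof.
rewrite /affm gtr0_norm //.
have -> : phi @^-1` `]x, z] = `](x - b) / c, (z - b) / c]%classic.
  apply/seteqP; split => y; rewrite /phi /= !in_itv /=.
    move=> /andP[h1 h2]; apply/andP; split.
      by rewrite ltr_pdivrMr // ; lra.
    by rewrite ler_pdivlMr //; lra.
  move=> /andP[h1 h2]; apply/andP; split.
    by move: h1; rewrite ltr_pdivrMr //; lra.
  by move: h2; rewrite ler_pdivlMr //; lra.
rewrite !lebesgue_measure_itv /= !lte_fin.
have [xz|zx] := ltP x z.
  have -> : (x - b) / c < (z - b) / c by rewrite ltr_pM2r ?invr_gt0 //; lra.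
  by rewrite -EFinD -EFinM; congr (_%:E); field; rewrite gt_eqF //.
have -> : (x - b) / c < (z - b) / c = false.
  by apply/negbTE; rewrite -leNgt ler_pM2r ?invr_gt0 //; lra.
by rewrite mule0.
Qed.
End Aff.


Lemma lebesgue_affine (R : realType) (b c : R) (c0 : 0 < c) (W : set R) : measurable W ->
  (@lebesgue_measure R ((fun y => (b + c * y)%R) @^-1` W) = (c^-1)%:E * @lebesgue_measure R W)%E.
Proof.
move=> mW.
have := @lebesgue_measure_unique R (@affm R b c) _ W mW.
rewrite /affm => ->.
  by rewrite muleA -EFinM gtr0_norm // mulVf ?gt_eqF // mul1e.
move=> X /ocitvP[->|[[x z] /= _ ->]]; first by rewrite measure0; exact/esym/affm0.
by rewrite -(@affm_itv R b c c0).
Qed.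

Lemma small_bad (R : realType) (h : nat -> R -> R)
  (mh : forall n, measurable_fun setT (h n)) (a b d : R)
  (hp : forall z, exists N, forall n, (N <= n)%N -> `|h n z - 1| < d)
  (eta : R) (eta0 : 0 < eta) :
  exists N, forall n, (N <= n)%N ->
    (@lebesgue_measure R (`[a, b] `&` [set z | (d <= `|h n z - 1|)%R]) < eta%:E)%E.
Proof.
pose S n := `[a, b] `&` [set z : R | d <= `|h n z - 1|].
have mS : forall n, measurable (S n).
  move=> n; apply: measurableI; first exact: measurable_itv.
  have mk : measurable_fun setT (fun z => `|h n z - 1|).
    apply: measurableT_comp; first exact: normr_measurable.
    by apply: measurable_funB => //; exact: measurable_cst.
  have -> : [set z : R | d <= `|h n z - 1|] = setT `&` ((fun z => `|h n z - 1|) @^-1` `[d, +oo[).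
    apply/seteqP; split => z /=; first by move=> hz; split => //; rewrite /= in_itv /= andbT.
    by move=> [_]; rewrite /= in_itv /= andbT.
  by apply: mk => //; exact: measurable_itv.
pose B N := \bigcup_(k in [set k | (N <= k)%N]) S k.
have mB : forall N, measurable (B N) by move=> N; apply: bigcup_measurable => k _; exact: mS.
have B0 : \bigcap_N B N = set0.
  apply/seteqP; split => // z /= Hz.
  have [N HN] := hp z.
  have [k /= Nk [_ /=]] := Hz N I.
  by move: (HN k Nk); rewrite ltNge => /negP.
have Bfin : (@lebesgue_measure R (B 0%N) < +oo)%E.
  have : (@lebesgue_measure R (B 0%N) <= @lebesgue_measure R `[a, b])%E.
    apply: (le_measure (@lebesgue_measure R)); rewrite ?inE //; first exact: mB.
    by move=> z [k _ []].
  move/le_lt_trans; apply.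
  by rewrite lebesgue_measure_itv; case: ifP => //; rewrite ltry.
have Bdec : {homo B : n m / (n <= m)%N >-> (m <= n)%O}.
  move=> n m nm; apply/asboolP => z [k /= mk Sk]; exists k => //=; exact: leq_trans mk.
have := @nonincreasing_cvg_mu _ _ _ (@lebesgue_measure R) B Bfin mB (bigcap_measurable _ (fun k _ => mB k)) Bdec.
rewrite B0 measure0 => /(_ (ex_intro _ 0%N I)) H.
have hnb : nbhs (0%E : \bar R) [set u | (u < eta%:E)%E].
  by apply: open_ereal_lt'; rewrite lte_fin.
have HH := H _ hnb.
repeat match type of HH with ex2 _ _ => fail 1 | _ => hnf in HH end.
case: HH => K _ HK.
exists K => n Kn; apply: (le_lt_trans _ (HK K (leqnn K))).
apply: (le_measure (@lebesgue_measure R)); rewrite ?inE //; first exact: mS.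
  exact: mB.
by move=> z Sz; exists n.
Qed.
Section Helpers.
Variable R : realType.

Lemma cvg_eps (h : R -> R) (l : R) : h @ +oo --> l ->
  forall e, 0 < e -> exists M, forall t, M < t -> `|h t - l| < e.
Proof.
move/cvgrPdist_lt => H e e0.
have [M [_ HM]] := H e e0.
by exists M => t Mt; rewrite distrC; exact: HM.
Qed.

Lemma eps_cvg (h : R -> R) (l : R) :
  (forall e, 0 < e -> exists M, forall t, M < t -> `|h t - l| < e) -> h @ +oo --> l.
Proof.
move=> H; apply/cvgrPdist_lt => e e0.
have [M HM] := H e e0.
exists M; split; first exact: num_real.
by move=> t Mt; rewrite distrC; exact: HM.
Qed.

Lemma nat_gt (M : R) : exists N : nat, M < N%:R.
Proof.
have [M0|M0] := leP M 0; first by exists 1%N; apply: (le_lt_trans M0); rewrite ltr01.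
exists (Num.Def.archi_bound M); exact: archi_boundP (ltW M0).
Qed.

Lemma alg8 (A B E d : R) : 0 < d -> d <= 1/2 -> `|A - 1| < d -> `|B - 1| < d ->
  `|E - 1| < d -> `|A * E / B - 1| < 8 * d.
Proof.
move=> d0 d2; rewrite !ltr_norml => /andP[a1 a2] /andP[b1 b2] /andP[e1 e2].
have B0 : 0 < B by lra.
have h1 : A * E - B < 4 * d by nra.
have h2 : - (4 * d) < A * E - B by nra.
have -> : A * E / B - 1 = (A * E - B) / B.
  by field; rewrite gt_eqF //.
rewrite ltr_pdivrMr // ltr_pdivlMr //; apply/andP; split; nra.
Qed.

Lemma expR_near1 (w : R) : `|w| <= 1/2 -> `|expR w - 1| <= 2 * `|w|.
Proof.
move=> hw.
have h1 := expR_ge1Dx w.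
have h2 := expR_ge1Dx (- w).
have hp := expR_gt0 w.
have hm : expR w * expR (- w) = 1 by rewrite -expRD subrr expR0.
have [w0|w0] := leP 0 w.
  move: hw; rewrite (ger0_norm w0) => w2.
  rewrite ler_norml; apply/andP; split; nra.
move: hw; rewrite (ltr0_norm w0) => w2.
rewrite ler_norml; apply/andP; split; nra.
Qed.
End Helpers.
Definition rr (R : realType) (f g : R -> R) (alpha t z : R) : R :=
  f (t + z * g t) / f t * expR (- (alpha * z)).
Arguments rr {R}.

Lemma rr_meas (R : realType) (f g : R -> R) (alpha t : R) :
  measurable_fun setT f -> measurable_fun setT (rr f g alpha t).
Proof.
move=> mf.
have m1 : measurable_fun setT (fun z : R => f (t + z * g t)).
  have -> : (fun z : R => f (t + z * g t)) = f \o (fun z => t + g t * z).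
    by apply/funext => z /=; rewrite mulrC.
  by apply: measurableT_comp; [exact: mf|exact: aff_meas].
have m2 : measurable_fun setT (fun z : R => expR (- (alpha * z))).
  have -> : (fun z : R => expR (- (alpha * z))) = expR \o (fun z => 0 + (- alpha) * z).
    by apply/funext => z /=; rewrite add0r mulNr.
  by apply: measurableT_comp; [exact: measurable_expR|exact: aff_meas].
rewrite /rr.
apply: measurable_funM => //.
apply: measurable_funM => //.
Qed.
Lemma bad_meas (R : realType) (h : R -> R) (mh : measurable_fun setT h) (a b d : R) :
  measurable (`[a, b] `&` [set z : R | d <= `|h z - 1|]).
Proof.
apply: measurableI; first exact: measurable_itv.
have mk : measurable_fun setT (fun z => `|h z - 1|).
  apply: measurableT_comp; first exact: normr_measurable.
  by apply: measurable_funB => //; exact: measurable_cst.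
have -> : [set z : R | d <= `|h z - 1|] = setT `&` ((fun z => `|h z - 1|) @^-1` `[d, +oo[).
  apply/seteqP; split => z /=; first by move=> hz; split => //; rewrite /= in_itv /= andbT.
  by move=> [_]; rewrite /= in_itv /= andbT.
by apply: mk => //; exact: measurable_itv.
Qed.

Lemma uct (R : realType) (alpha : R) (f g : R -> R) (M0 : R)
 (mf : measurable_fun setT f)
 (fpos : forall t, M0 < t -> 0 < f t)
 (gpos : forall t, 0 < g t)
 (pw : forall z d, 0 < d -> exists M, forall t, M < t -> `|rr f g alpha t z - 1| < d)
 (sn : forall e, 0 < e -> exists M, forall t, M < t -> forall x, 0 <= x <= 1 ->
        `|g (t + x * g t) / g t - 1| < e) :
 forall eps, 0 < eps -> exists M, forall u, M < u -> forall x, 0 <= x <= 1 ->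
   `|rr f g alpha u x - 1| < eps.
Proof.
move=> eps eps0.
apply: contrapT => Hneg.
have hseq : forall n : nat, exists p : R * R, n%:R + `|M0| < p.1 /\ 0 <= p.2 <= 1 /\
    eps <= `|rr f g alpha p.1 p.2 - 1|.
  move=> n; apply: contrapT => Hn; apply: Hneg; exists (n%:R + `|M0|) => u Mu x hx.
  rewrite ltNge; apply/negP => bad; apply: Hn; by exists (u, x).
have [p hp] := @choice _ _ _ hseq.
pose t n := (p n).1.
pose x n := (p n).2.
pose s n := t n + x n * g (t n).
have htn : forall n, n%:R < t n /\ M0 < t n.
  move=> n; have [h1 _] := hp n; have := ler_norm M0; have := normr_ge0 M0.
  have : (0:R) <= n%:R by rewrite ler0n.
  rewrite /t; move=> *; split; lra.
have hx : forall n, 0 <= x n <= 1 by move=> n; have [_ [h _]] := hp n.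
have hsn : forall n, t n <= s n.
  move=> n; rewrite /s; have := hx n => /andP[h0 _]; have := gpos (t n).
  by move=> h1; rewrite lerDl mulr_ge0 // ltW.
pose d := eps / (8 * (1 + eps)).
have d0 : 0 < d by rewrite /d divr_gt0 //; lra.
have d8 : 8 * d <= eps.
  rewrite /d mulrA mulrC ler_pdivrMl; last lra.
  by rewrite mulrC; nra.
have d2 : d <= 1/8.
  by rewrite /d ler_pdivrMr; nra.
have [N1 HN1] : exists N, forall n, (N <= n)%N ->
    (@lebesgue_measure R (`[1%R, 2%R] `&` [set y | (d <= `|rr f g alpha (t n) y - 1|)%R]) < (1/4)%R%:E)%E.
  apply: (@small_bad R (fun n => rr f g alpha (t n))) => //.
  - by move=> n; exact: rr_meas.
  - move=> z; have [M HM] := pw z d d0; have [N HN] := @nat_gt R M.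
    exists N => n Nn; apply: HM; have [h1 _] := htn n.
    apply: (lt_trans HN); apply: (le_lt_trans _ h1); by rewrite ler_nat.
have [N2 HN2] : exists N, forall n, (N <= n)%N ->
    (@lebesgue_measure R (`[0%R, 4%R] `&` [set z | (d <= `|rr f g alpha (s n) z - 1|)%R]) < (1/8)%R%:E)%E.
  apply: (@small_bad R (fun n => rr f g alpha (s n))) => //.
  - by move=> n; exact: rr_meas.
  - move=> z; have [M HM] := pw z d d0; have [N HN] := @nat_gt R M.
    exists N => n Nn; apply: HM; have [h1 _] := htn n.
    apply: (lt_trans HN); apply: (le_lt_trans _ (lt_le_trans h1 (hsn n))); by rewrite ler_nat.
pose e3 := d / (8 * (`|alpha| + 1)).
have e30 : 0 < e3 by rewrite /e3 divr_gt0 // mulr_gt0 //; rewrite ltr_pwDr.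
have e3a : e3 * (8 * (`|alpha| + 1)) <= d.
  by rewrite /e3 mulfVK // gt_eqF // mulr_gt0 // ltr_pwDr.
have [M3 HM3] := sn e3 e30.
have [N3 HN3] := @nat_gt R M3.
pose n := (N1 + N2 + N3)%N.
have nN1 : (N1 <= n)%N by rewrite /n -addnA leq_addr.
have nN2 : (N2 <= n)%N by rewrite /n addnC addnA leq_addl.
have nN3 : (N3 <= n)%N by rewrite /n leq_addl.
have [tn_n tn_M0] := htn n.
have /andP[xn0 xn1] := hx n.
have [_ [_ Hbad]] := hp n.
have gt0 := gpos (t n).
have gs0 := gpos (s n).
pose q := g (s n) / g (t n).
have hq : `|q - 1| < e3.
  apply: HM3; last by rewrite xn0 xn1.
  apply: (lt_trans HN3); apply: (le_lt_trans _ tn_n); by rewrite ler_nat.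
have e3s : e3 <= 1/64.
  have := normr_ge0 alpha; nra.
have q0 : 3/4 <= q by move: hq; rewrite ltr_norml; lra.
have q1 : q <= 5/4 by move: hq; rewrite ltr_norml; lra.
have qpos : 0 < q by lra.
pose U := `[1%R, 2%R] `&` [set y | (d <= `|rr f g alpha (t n) y - 1|)%R].
pose W := `[0%R, 4%R] `&` [set z | (d <= `|rr f g alpha (s n) z - 1|)%R].
pose V := (fun y => (- (x n) / q) + q^-1 * y) @^-1` W.
have mU : measurable U by apply: bad_meas; exact: rr_meas.
have mW : measurable W by apply: bad_meas; exact: rr_meas.
have mV : measurable V.
  by rewrite /V -[X in measurable X]setTI; apply: aff_meas.
have lU := HN1 n nN1.
have lW := HN2 n nN2.
have lV : (@lebesgue_measure R V < (1/4)%R%:E)%E.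
  rewrite /V lebesgue_affine ?invr_gt0 // invrK.
  have := lW; rewrite -(@lte_pmul2l _ q%:E) // ?lte_fin // => /lt_le_trans; apply.
  by rewrite -EFinM lee_fin; lra.
have [y [y12 nUV]] : exists y, `[1%R, 2%R]%classic y /\ ~ (U `|` V) y.
  apply: contrapT => H0.
  have sub : `[1%R, 2%R]%classic `<=` U `|` V.
    move=> y y12; have [//|nUV] := pselect ((U `|` V) y).
    by exfalso; apply: H0; exists y.
  have h1 : (@lebesgue_measure R `[1%R, 2%R] <= @lebesgue_measure R (U `|` V))%E.
    by apply: (le_measure (@lebesgue_measure R)); rewrite ?inE //; exact: measurableU.
  have h2 := measureU2 (@lebesgue_measure R) mU mV.
  have h3 := lteD lU lV.
  have := le_lt_trans h1 (le_lt_trans h2 h3).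
  rewrite lebesgue_measure_itv /=.
  case: ifP => h12; rewrite -?EFinD ?lte_fin; first by move=> ?; lra.
  by move: h12; rewrite lte_fin ltr1n.
move: (y12); rewrite /= in_itv /= => /andP[y1 y2].
pose z := - (x n) / q + q^-1 * y.
have hA : `|rr f g alpha (t n) y - 1| < d.
  by rewrite ltNge; apply/negP => h; apply: nUV; left; split.
have zq : z * q = y - x n by rewrite /z; field; rewrite gt_eqF //.
have z0 : 0 <= z by nra.
have z4 : z <= 4 by nra.
have hB : `|rr f g alpha (s n) z - 1| < d.
  rewrite ltNge; apply/negP => h; apply: nUV; right; rewrite /V /=; split => //.
  by rewrite /= in_itv /= z0 z4.
pose D := y - x n - z.
have Dq : D * q = (y - x n) * (q - 1) by rewrite /D /z; field; rewrite gt_eqF //.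
have hD : `|D| <= 3 * e3.
  move: hq; rewrite ltr_norml => /andP[q2 q3].
  rewrite ler_norml; apply/andP; split; nra.
have hw : `|alpha * D| <= 3 * d / 8.
  rewrite normrM; have := normr_ge0 alpha; have := normr_ge0 D; nra.
have hE : `|expR (alpha * D) - 1| < d.
  have : `|alpha * D| <= 1/2 by lra.
  by move/(@expR_near1 R) => H'; lra.
have ft0 : 0 < f (t n) by exact: fpos.
have fs0 : 0 < f (s n) by apply: fpos; exact: (lt_le_trans tn_M0 (hsn n)).
have hz2 : z * g (s n) = (y - x n) * g (t n).
  by rewrite /z /q; field; rewrite !gt_eqF //.
have P : s n + z * g (s n) = t n + y * g (t n) by rewrite hz2 /s; ring.
have ee : expR (- (alpha * x n)) * expR (- (alpha * z)) =
    expR (- (alpha * y)) * expR (alpha * D) by rewrite -!expRD /D; congr expR; ring.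
have keyeq : rr f g alpha (t n) (x n) * rr f g alpha (s n) z =
    rr f g alpha (t n) y * expR (alpha * D).
  rewrite /rr P -/(s n).
  rewrite -[RHS]mulrA -ee; field; rewrite !gt_eqF //.
have Bpos : 0 < rr f g alpha (s n) z by move: hB; rewrite ltr_norml; lra.
have : `|rr f g alpha (t n) (x n) - 1| < eps.
  have -> : rr f g alpha (t n) (x n) = rr f g alpha (t n) y * expR (alpha * D) / rr f g alpha (s n) z.
    by rewrite -keyeq mulfK // gt_eqF.
  apply: (lt_le_trans _ d8); apply: alg8 => //; lra.
by rewrite ltNge Hbad.
Qed.
Lemma chain_gen (R : realType) (g h : R -> R) (t K : R) (K1 : 1 <= K) (ht : 0 <= h t)
  (gpos : forall u, 0 < g u)
  (A : forall u, t <= u -> forall x, 0 <= x <= 1 -> h (u + x * g u) <= K * h u)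
  (B : forall u, t <= u -> h (u + g u) <= h u)
  (C : forall s, exists k : nat, s <= iter k (fun u => u + g u) t) :
  forall s, t <= s -> h s <= K * h t.
Proof.
pose tau k := iter k (fun u => u + g u) t.
have claim : forall k, t <= tau k /\ h (tau k) <= h t /\
    forall s, t <= s <= tau k -> h s <= K * h t.
  elim=> [|k [IH1 [IH2 IH3]]].
    split; first by rewrite /tau /=.
    split; first by rewrite /tau /=.
    move=> s /andP[h1 h2]; have -> : s = t by apply/eqP; rewrite eq_le h2 h1.
    by rewrite ler_peMl.
  have tS : tau k.+1 = tau k + g (tau k) by [].
  have gk := gpos (tau k).
  split; first by rewrite tS; lra.
  split; first by rewrite tS; apply: (le_trans (B _ IH1)).
  move=> s /andP[h1 h2].
  have [sk|ks] := leP s (tau k); first by apply: IH3; rewrite h1 sk.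
  pose x := (s - tau k) / g (tau k).
  have xs : s = tau k + x * g (tau k) by rewrite /x mulfVK ?gt_eqF //; ring.
  have x0 : 0 <= x by rewrite /x divr_ge0 //; lra.
  have x1 : x <= 1 by rewrite /x ler_pdivrMr //; move: h2; rewrite tS; lra.
  rewrite xs; apply: (le_trans (A _ IH1 x _)); first by rewrite x0 x1.
  by apply: ler_wpM2l => //; lra.
move=> s ts; have [k sk] := C s.
by have [_ [_ H]] := claim k; apply: H; rewrite ts sk.
Qed.

Lemma unb_gen (R : realType) (tau : nat -> R) (c s : R) (c0 : 0 < c)
  (H : forall k, tau k < s -> tau k + c <= tau k.+1) : exists k, s <= tau k.
Proof.
apply: contrapT => Hn.
have all : forall k, tau k < s.
  move=> k; rewrite ltNge; apply/negP => sk; apply: Hn; by exists k.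
have low : forall k, tau 0%N + k%:R * c <= tau k.
  elim=> [|k IH]; first by rewrite mul0r addr0.
  have := H k (all k); rewrite -natr1 mulrDl mul1r; lra.
have [N HN] := @nat_gt R ((s - tau 0%N) / c).
have := low N; have := all N.
move: HN; rewrite ltr_pdivrMr // => HN.
lra.
Qed.

Lemma sup_env (R : realType) (h : R -> R) (M0 : R) (hpos : forall t, M0 < t -> 0 < h t)
  (H : forall e, 0 < e -> exists M, forall t s, M < t -> t <= s -> h s <= (1 + e) * h t) :
  exists H' : R -> R, ult_nonincreasing H' /\
    (forall e, 0 < e -> exists M, forall t, M < t -> h t <= H' t <= (1 + e) * h t).
Proof.
pose E t := [set h s | s in [set s | t <= s]].
pose H' t := sup (E t).
have [M1 HM1] := H 1 ltr01.
pose M := `|M0| + `|M1|.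
have MM0 : M0 <= M by rewrite /M; have := ler_norm M0; have := normr_ge0 M1; lra.
have MM1 : M1 <= M by rewrite /M; have := ler_norm M1; have := normr_ge0 M0; lra.
have Ene : forall t, E t !=set0 by move=> t; exists (h t); exists t => //=.
have Eub : forall t, M < t -> ubound (E t) ((1 + 1) * h t).
  by move=> t Mt _ [s ts <-]; apply: HM1 => //; lra.
have Esup : forall t, M < t -> has_sup (E t).
  by move=> t Mt; split; [exact: Ene | exists ((1 + 1) * h t); exact: Eub].
exists H'; split.
  exists M => s t Ms st.
  apply: ge_sup; first exact: Ene.
  move=> _ [r tr <-]; apply: sup_upper_bound; first exact: Esup.
  by exists r => //; rewrite /=; apply: (le_trans st).
move=> e e0; have [Me HMe] := H e e0.
exists (Num.max M Me) => t; rewrite gt_max => /andP[Mt Met].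
apply/andP; split.
  by apply: sup_upper_bound; [exact: Esup | exists t => //=].
apply: ge_sup; first exact: Ene.
by move=> _ [s ts <-]; apply: HMe.
Qed.

Lemma iter_ge (R : realType) (g : R -> R) (gpos : forall u, 0 < g u) (t : R) :
  forall k, t <= iter k (fun u => u + g u) t.
Proof.
elim=> [|k IH] //=; have := gpos (iter k (fun u => u + g u) t); lra.
Qed.

Lemma rr_id (R : realType) (f g : R -> R) (alpha u x : R) : 0 < f u ->
  f (u + x * g u) = rr f g alpha u x * f u * expR (alpha * x).
Proof.
move=> fu.
have ee : expR (- (alpha * x)) * expR (alpha * x) = 1 by rewrite -expRD addNr expR0.
have : rr f g alpha u x * f u * expR (alpha * x) =
   f (u + x * g u) * (expR (- (alpha * x)) * expR (alpha * x)).
  by rewrite /rr; field; rewrite gt_eqF.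
by rewrite ee mulr1.
Qed.

Theorem mainTheorem8 (R : realType) (alpha : R) (g f : R -> R) :
  self_neglecting g -> Gamma alpha g f ->
  (ult_nonincreasing g -> alpha < 0 ->
     exists ft : R -> R, tail_equiv f ft /\ ult_nonincreasing ft) /\
  (ult_nondecreasing g -> 0 < alpha ->
     exists ft : R -> R, tail_equiv f ft /\ ult_nondecreasing ft).
Proof.
move=> [mg [gpos [_ sng]]] [mf [[M0 fpos] conv]].
have pw : forall z d, 0 < d -> exists M, forall t, M < t -> `|rr f g alpha t z - 1| < d.
  move=> z d d0.
  have [M HM] := @cvg_eps R _ _ (conv z) (d * expR (alpha * z)) (mulr_gt0 d0 (expR_gt0 _)).
  exists M => t Mt; have := HM t Mt.
  have -> : rr f g alpha t z - 1 =
      (f (t + z * g t) / f t - expR (alpha * z)) * expR (- (alpha * z)).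
    by rewrite /rr mulrBl -expRD subrr expR0.
  rewrite normrM (gtr0_norm (expR_gt0 _)) => H1.
  have E1 : expR (alpha * z) * expR (- (alpha * z)) = 1 by rewrite -expRD subrr expR0.
  have := expR_gt0 (- (alpha * z)); have := expR_gt0 (alpha * z); nra.
have sn : forall e, 0 < e -> exists M, forall t, M < t -> forall x, 0 <= x <= 1 ->
        `|g (t + x * g t) / g t - 1| < e.
  by move=> e e0; have [M HM] := sng 0 1 e e0; exists M => t Mt x hx; exact: HM.
have U := @uct R alpha f g M0 mf fpos gpos pw sn.
split.
- move=> [Mg gdec] a0.
  have bound : forall e, 0 < e -> exists M, forall t s, M < t -> t <= s -> f s <= (1 + e) * f t.
    move=> e e0.
    pose a := expR alpha.
    have a1 : a < 1 by rewrite /a expR_lt1.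
    have apos : 0 < a by exact: expR_gt0.
    pose e1 := (1 - a) * e / (1 + e).
    have e10 : 0 < e1 by rewrite /e1 divr_gt0 ?mulr_gt0 //; lra.
    have e1e : e1 <= e by rewrite /e1 ler_pdivrMr; nra.
    have e1a : (1 + e1) * a <= 1.
      have : e1 * (1 + e) = (1 - a) * e by rewrite /e1 mulfVK // gt_eqF //; lra.
      nra.
    clearbody e1.
    have [M1 HM1] := U e1 e10.
    pose M := `|M0| + `|M1| + `|Mg|.
    have MM0 : M0 <= M by rewrite /M; have := ler_norm M0; have := normr_ge0 M1; have := normr_ge0 Mg; lra.
    have MM1 : M1 <= M by rewrite /M; have := ler_norm M1; have := normr_ge0 M0; have := normr_ge0 Mg; lra.
    have MMg : Mg <= M by rewrite /M; have := ler_norm Mg; have := normr_ge0 M1; have := normr_ge0 M0; lra.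
    exists M => t s Mt ts.
    have ft0 : 0 < f t by apply: fpos; lra.
    have key : forall u, t <= u -> forall x, 0 <= x <= 1 ->
        f (u + x * g u) <= (1 + e1) * expR (alpha * x) * f u.
      move=> u tu x hx.
      have fu : 0 < f u by apply: fpos; lra.
      rewrite (@rr_id R f g alpha u x fu).
      have Mu : M1 < u by lra.
      have := HM1 u Mu x hx; rewrite ltr_norml => /andP[_ r1].
      have := mulr_gt0 (expR_gt0 (alpha * x)) fu.
      move: r1; set E := expR (alpha * x); set r := rr f g alpha u x => r1 Ep.
      have -> : r * f u * E = r * (E * f u) by ring.
      have -> : (1 + e1) * E * f u = (1 + e1) * (E * f u) by ring.
      by apply: ler_wpM2r; [exact: ltW | lra].
    apply: (@le_trans _ _ ((1 + e1) * f t)).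
      apply: (@chain_gen R g f t (1 + e1)) => //.
      - lra.
      - exact: ltW.
      - move=> u tu x hx; apply: (le_trans (key u tu x hx)).
        have fu : 0 < f u by apply: fpos; lra.
        have : expR (alpha * x) <= 1.
          rewrite -expR0 ler_expR; move: hx => /andP[x0 _]; nra.
        have h1 : 0 <= (1 + e1) * f u by apply: mulr_ge0; lra.
        nra.
      - move=> u tu; have := key u tu 1; rewrite mul1r mulr1 => /(_ ltac:(lra)) H.
        have fu : 0 < f u by apply: fpos; lra.
        apply: (le_trans H); rewrite -/a.
        have h1 : 0 <= f u by lra.
        nra.
      - move=> s'; apply: (@unb_gen R (fun k => iter k (fun u => u + g u) t) (g s') s' (gpos s')).
        move=> k ks /=.
        have tk := @iter_ge R g gpos t k.
        have Mk : Mg < iter k (fun u => u + g u) t by lra.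
        have := gdec (iter k (fun u => u + g u) t) s' Mk (ltW ks); lra.
    by apply: ler_wpM2r; lra.
  have [H' [Hmono Hb]] := @sup_env R f M0 fpos bound.
  exists H'; split => //.
  apply: eps_cvg => e e0.
  have [M HM] := Hb (e / 2) (ltac:(lra)).
  exists (`|M| + `|M0|) => t Mt.
  have MtM : M < t by have := ler_norm M; have := normr_ge0 M0; lra.
  have MtM0 : M0 < t by have := ler_norm M0; have := normr_ge0 M; lra.
  have ft0 := fpos t MtM0.
  have /andP[b1 b2] := HM t MtM.
  have Hp : 0 < H' t by lra.
  have -> : f t / H' t - 1 = (f t - H' t) / H' t by field; rewrite gt_eqF.
  rewrite ltr_norml ltr_pdivrMr // ltr_pdivlMr //; apply/andP; split; nra.
- move=> [Mg ginc] a0.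
  pose h := fun t => (f t)^-1.
  have hpos : forall t, M0 < t -> 0 < h t by move=> t Mt; rewrite /h invr_gt0; exact: fpos.
  have bound : forall e, 0 < e -> exists M, forall t s, M < t -> t <= s -> h s <= (1 + e) * h t.
    move=> e e0.
    pose a := expR alpha.
    have a1 : 1 < a by rewrite /a expR_gt1.
    have ainv : a^-1 * a = 1 by rewrite mulVf // gt_eqF //; lra.
    have ai1 : a^-1 < 1 by rewrite invf_lt1 //; lra.
    have ai0 : 0 < a^-1 by rewrite invr_gt0; lra.
    pose e1 := (1 - a^-1) * e / (1 + e).
    have e1q : e1 * (1 + e) = (1 - a^-1) * e by rewrite /e1 mulfVK // gt_eqF //; lra.
    have e10 : 0 < e1 by rewrite /e1 divr_gt0 // ?mulr_gt0 //; lra.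
    clearbody e1.
    have e1s : e1 < 1 - a^-1.
      have : e1 * (1 + e) < (1 - a^-1) * (1 + e) by rewrite e1q ltr_pM2l //; lra.
      by rewrite ltr_pM2r //; lra.
    have e1a : 1 <= (1 - e1) * a.
      by rewrite -ainv; apply: ler_wpM2r; lra.
    have e1b : 1 <= (1 + e) * (1 - e1).
      have -> : (1 + e) * (1 - e1) = 1 + e - e1 * (1 + e) by ring.
      rewrite e1q; have -> : 1 + e - (1 - a^-1) * e = 1 + a^-1 * e by ring.
      by have := mulr_ge0 (ltW ai0) (ltW e0); lra.
    have [M1 HM1] := U e1 e10.
    pose M := `|M0| + `|M1| + `|Mg|.
    have MM0 : M0 <= M by rewrite /M; have := ler_norm M0; have := normr_ge0 M1; have := normr_ge0 Mg; lra.
    have MM1 : M1 <= M by rewrite /M; have := ler_norm M1; have := normr_ge0 M0; have := normr_ge0 Mg; lra.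
    have MMg : Mg <= M by rewrite /M; have := ler_norm Mg; have := normr_ge0 M1; have := normr_ge0 M0; lra.
    clearbody M.
    exists M => t s Mt ts.
    have ft0 : 0 < f t by apply: fpos; lra.
    have key : forall u, t <= u -> forall x, 0 <= x <= 1 ->
        (1 - e1) * expR (alpha * x) * f u <= f (u + x * g u).
      move=> u tu x hx.
      have fu : 0 < f u by apply: fpos; lra.
      rewrite (@rr_id R f g alpha u x fu).
      have Mu : M1 < u by lra.
      have := HM1 u Mu x hx; rewrite ltr_norml => /andP[r1 _].
      have := mulr_gt0 (expR_gt0 (alpha * x)) fu.
      move: r1; set E := expR (alpha * x); set r := rr f g alpha u x => r1 Ep.
      have -> : r * f u * E = r * (E * f u) by ring.
      have -> : (1 - e1) * E * f u = (1 - e1) * (E * f u) by ring.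
      by apply: ler_wpM2r; [exact: ltW | lra].
    have hinv : forall v w : R, 0 < v -> v <= w -> w^-1 <= v^-1.
      move=> v w v0 vw; have w0 : 0 < w by apply: lt_le_trans vw.
      by rewrite lef_pV2 ?posrE.
    apply: (@le_trans _ _ ((1 - e1)^-1 * h t)).
      apply: (@chain_gen R g h t ((1 - e1)^-1)) => //.
      - by rewrite invf_ge1 //; lra.
      - by apply/ltW/hpos; lra.
      - move=> u tu x hx.
        have fu : 0 < f u by apply: fpos; lra.
        have : 1 <= expR (alpha * x).
          by rewrite -expR0 ler_expR; move: hx => /andP[x0 _]; apply: mulr_ge0 => //; exact: ltW.
        move=> E1.
        have k1 := key u tu x hx.
        have k2 : (1 - e1) * f u <= f (u + x * g u).
          apply: le_trans k1.
          have -> : (1 - e1) * expR (alpha * x) * f u = ((1 - e1) * f u) * expR (alpha * x) by ring.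
          by apply: ler_peMr => //; apply: mulr_ge0; lra.
        rewrite /h -invfM; apply: hinv => //; apply: mulr_gt0 => //; lra.
      - move=> u tu; have := key u tu 1; rewrite mul1r mulr1 => /(_ ltac:(lra)) H.
        have fu : 0 < f u by apply: fpos; lra.
        rewrite /h; apply: hinv => //.
        apply: le_trans H; rewrite -/a.
        by rewrite -[X in X <= _]mul1r; apply: ler_wpM2r => //; exact: ltW.
      - move=> s'; apply: (@unb_gen R (fun k => iter k (fun u => u + g u) t) (g t) s' (gpos t)).
        move=> k ks /=.
        have tk := @iter_ge R g gpos t k.
        have Mk : Mg < t by lra.
        have := ginc t (iter k (fun u => u + g u) t) Mk tk; lra.
    apply: ler_wpM2r; first by apply/ltW/hpos; lra.
    by rewrite -div1r ler_pdivrMr //; lra.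
  have [H' [[Mm Hmono] Hb]] := @sup_env R h M0 hpos bound.
  have [M1 HM1] := Hb 1 ltr01.
  pose MM := `|Mm| + `|M1| + `|M0|.
  have MMm : Mm <= MM by rewrite /MM; have := ler_norm Mm; have := normr_ge0 M1; have := normr_ge0 M0; lra.
  have MM1 : M1 <= MM by rewrite /MM; have := ler_norm M1; have := normr_ge0 Mm; have := normr_ge0 M0; lra.
  have MM0 : M0 <= MM by rewrite /MM; have := ler_norm M0; have := normr_ge0 M1; have := normr_ge0 Mm; lra.
  clearbody MM.
  have H'pos : forall t, MM < t -> 0 < H' t.
    move=> t Mt; have /andP[b1 _] := HM1 t (ltac:(lra)); have := hpos t (ltac:(lra)); lra.
  exists (fun t => (H' t)^-1); split.
    apply: eps_cvg => e e0.
    have [M HM] := Hb (e / 2) (ltac:(lra)).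
    exists (`|M| + `|MM|) => t Mt.
    have MtM : M < t by have := ler_norm M; have := normr_ge0 MM; lra.
    have MtM0 : MM < t by have := ler_norm MM; have := normr_ge0 M; lra.
    have ft0 : 0 < f t by apply: fpos; lra.
    have /andP[b1 b2] := HM t MtM.
    have Hp := H'pos t MtM0.
    rewrite invrK.
    have ff : f t * h t = 1 by rewrite /h mulfV // gt_eqF.
    have c1 : 1 <= f t * H' t by rewrite -ff; apply: ler_wpM2l => //; exact: ltW.
    have c2 : f t * H' t <= 1 + e / 2.
      have : f t * H' t <= f t * ((1 + e / 2) * h t) by apply: ler_wpM2l => //; exact: ltW.
      by rewrite mulrCA ff mulr1.
    rewrite ltr_norml; apply/andP; split; lra.
  exists MM => s t Ms st.
  have Hts := Hmono s t (ltac:(lra)) st.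
  rewrite lef_pV2 ?posrE //; apply: H'pos; lra.
Qed.
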